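(* Let $n\ge1$, $k\ge2$, let $\nu$ be a distribution on $[k]$ with $\nu(i)>0$ for all $i$, and let $\Pi$ be a deterministic $k$-party protocol which solves unique set-disjointness under $\mathcal{D}_\nu$ with error at most $2\%$. Let $(W,X)$ be sampled as in the definition of $\mathcal{D}^0_\nu$ and define $$L=\frac1n\sum_{i\in[k]}\frac{1}{\nu(i)}\sum_{j\in[n]}I\big(X_i(j):\Pi(X)\,\big|\,W\big).$$ Then there is a $k$-party protocol $\Lambda$ for the $k$-bit AND function (player $i$ holds a bit $U_i$; the goal is to output $\prod_i U_i$), using public randomness $R$ and private randomness, such that: (1) on input $0^k$ and on input $1^k$, $\Lambda$ outputs the wrong value with probability at most $8\%$; and (2) $L=\sum_{i\in[k]} I\big(b:\Lambda(e_i[b],R)\,\big|\,R\big)$, where $b$ is a uniform bit independent of all randomness of $\Lambda$.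
   Context: Inputs are $X=(X_1,\ldots,X_k)\in(\{0,1\}^n)^k$, player $i$ holding $X_i$; $X^j=(X_1(j),\ldots,X_k(j))$, $|X^j|$ its Hamming weight; $\mathcal{F}_0=\{X:\forall j,|X^j|\le1\}$ and $\mathcal{F}_1=\{X:\exists j,|X^j|=k,\forall j'\neq j,|X^{j'}|\le1\}$, correct output $b$ on $\mathcal{F}_b$. Protocols are in the blackboard model; $\Pi(X)$ and $\Lambda(U,R)$ denote transcripts (whose output bit is determined by the transcript). $\mathcal{D}^0_\nu$: sample $W\in[k]^n$ with i.i.d. coordinates $\sim\nu$; for each $j$, if $W_j=i$ then $X_i(j)$ is a uniform bit and $X_{i'}(j)=0$ for $i'\ne i$. $\mathcal{D}^1_\nu$: sample $X\sim\mathcal{D}^0_\nu$ and uniform $j^*\in[n]$, set $X^{j^*}=1^k$. $\mathcal{D}_\nu$: uniform bit $b$, then $X\sim \mathcal{D}^b_\nu$; error is the probability the output differs from $b$. For $i\in[k]$ and a bit $b$, $e_i[b]\in\{0,1\}^k$ is the vector with $b$ in coordinate $i$ and $0$ elsewhere. *)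

(* Defs.v *)
From HB Require Import structures.
From mathcomp Require Import all_boot all_order all_algebra.
From mathcomp Require Import reals exp.
Set Implicit Arguments. Unset Strict Implicit. Unset Printing Implicit Defensive.
Import Order.TTheory GRing.Theory Num.Theory.
Local Open Scope ring_scope.

(* Each player holds a private value of type [A].  At an internal node,
   the player [i] (determined by the board so far, i.e. by the position in
   the tree) writes a bit [f (x i)] on the board, computed from its own
   input (the dependence on the board contents is the position in the tree);
   the protocol continues in the left subtree on bit [false], right on [true]. *)
Inductive protocol (k : nat) (A : Type) : Type :=
| Leaf of bool
| Node of 'I_k & (A -> bool) & protocol k A & protocol k A.
Arguments Leaf {k A}.

Fixpoint run (k : nat) (A : Type) (p : protocol k A) (x : 'I_k -> A)
  : seq bool * bool :=
  match p with
  | Leaf o => ([::], o)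
  | Node i f p0 p1 =>
      let c := f (x i) in
      let r := run (if c then p1 else p0) x in (c :: r.1, r.2)
  end.

Definition transcript k A (p : protocol k A) (x : 'I_k -> A) : seq bool :=
  (run p x).1.
(* output bit (a function of the transcript, since the tree is fixed) *)
Definition output k A (p : protocol k A) (x : 'I_k -> A) : bool :=
  (run p x).2.

Definition is_dist (R : realType) (T : finType) (p : T -> R) : Prop :=
  (forall t, 0 <= p t) /\ \sum_(t : T) p t = 1.

Definition Pr (R : realType) (T : finType) (p : T -> R) (E : pred T) : R :=
  \sum_(t : T | E t) p t.

Definition log2 (R : realType) (x : R) : R := ln x / ln 2.

Definition cmi (R : realType) (T : finType) (p : T -> R)
  (A B C : eqType) (a : T -> A) (b : T -> B) (c : T -> C) : R :=
  \sum_(t : T) p t *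
    log2 ((Pr p [pred s | [&& a s == a t, b s == b t & c s == c t]]
           * Pr p [pred s | c s == c t])
          / (Pr p [pred s | (a s == a t) && (c s == c t)]
             * Pr p [pred s | (b s == b t) && (c s == c t)])).

(* X = (X_1,...,X_k), X_i : {0,1}^n, encoded as x i j = X_i(j). *)
Definition inputs (k n : nat) := {ffun 'I_k -> {ffun 'I_n -> bool}}.

(* probability of (W, X) = (w, x) under the sampling of D^0_nu *)
Definition D0 (R : realType) (k n : nat) (nu : 'I_k -> R)
  (w : {ffun 'I_n -> 'I_k}) (x : inputs k n) : R :=
  \prod_(j < n) (nu (w j) *
     (if [forall i : 'I_k, (i != w j) ==> ~~ x i j] then 2^-1 else 0)).

Definition setcol (k n : nat) (x : inputs k n) (j : 'I_n) : inputs k n :=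
  [ffun i => [ffun j' => if j' == j then true else x i j']].

(* error of a deterministic protocol under D_nu (b uniform, X ~ D^b_nu) *)
Definition disj_error (R : realType) (k n : nat) (nu : 'I_k -> R)
  (P : protocol k {ffun 'I_n -> bool}) : R :=
  2^-1 * (\sum_(w : {ffun 'I_n -> 'I_k}) \sum_(x : inputs k n)
            D0 nu w x * (if output P (fun i => x i) then 1 else 0))
  + 2^-1 * (\sum_(w : {ffun 'I_n -> 'I_k}) \sum_(x : inputs k n)
            D0 nu w x * (n%:R^-1 * \sum_(j < n)
               (if output P (fun i => setcol x j i) then 0 else 1))).

Definition infoL (R : realType) (k n : nat) (nu : 'I_k -> R)
  (P : protocol k {ffun 'I_n -> bool}) : R :=
  n%:R^-1 * \sum_(i < k) (nu i)^-1 * \sum_(j < n)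
    cmi (fun om : {ffun 'I_n -> 'I_k} * inputs k n => D0 nu om.1 om.2)
        (fun om => om.2 i j)
        (fun om => transcript P (fun i' => om.2 i'))
        (fun om => om.1).

Definition evec (k : nat) (i : 'I_k) (b : bool) : 'I_k -> bool :=
  fun i' => if i' == i then b else false.

(* Randomized protocol for AND_k: public randomness r : RT with law pR,
   private randomness ps i : PT of player i with law mu i (independent);
   for each value r of the public coin, a deterministic protocol in which
   player i holds (U_i, ps i). *)
Definition and_error (R : realType) (k : nat) (RT PT : finType)
  (pR : RT -> R) (mu : 'I_k -> PT -> R)
  (Lam : RT -> protocol k (bool * PT)) (u : bool) : R :=
  \sum_(r : RT) \sum_(ps : {ffun 'I_k -> PT})
    pR r * (\prod_(i < k) mu i (ps i)) *
    (if output (Lam r) (fun i => (u, ps i)) != u then 1 else 0).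

(* I(b : Lambda(e_i[b], R) | R) with b uniform, independent of R and of the
   private randomness *)
Definition and_info (R : realType) (k : nat) (RT PT : finType)
  (pR : RT -> R) (mu : 'I_k -> PT -> R)
  (Lam : RT -> protocol k (bool * PT)) (i : 'I_k) : R :=
  cmi (fun om : bool * RT * {ffun 'I_k -> PT} =>
         2^-1 * pR om.1.2 * \prod_(i' < k) mu i' (om.2 i'))
      (fun om => om.1.1)
      (fun om => transcript (Lam om.1.2)
                   (fun i' => (evec i om.1.1 i', om.2 i')))
      (fun om => om.1.2).

(* Main.v *)
Require Import Defs.
From HB Require Import structures.
From mathcomp Require Import all_boot all_order all_algebra.
From mathcomp Require Import reals exp.
From mathcomp Require Import ring lra perm.
Set Implicit Arguments. Unset Strict Implicit. Unset Printing Implicit Defensive.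
Import Order.TTheory GRing.Theory Num.Theory.
Local Open Scope ring_scope.

Section Gen.
Variable R : realType.

Definition lr (T : finType) (p : T -> R) (A B C : eqType)
  (a : T -> A) (b : T -> B) (c : T -> C) (t : T) : R :=
    log2 ((Pr p [pred s | [&& a s == a t, b s == b t & c s == c t]]
           * Pr p [pred s | c s == c t])
          / (Pr p [pred s | (a s == a t) && (c s == c t)]
             * Pr p [pred s | (b s == b t) && (c s == c t)])).

Lemma cmiE (T : finType) (p : T -> R) (A B C : eqType)
  (a : T -> A) (b : T -> B) (c : T -> C) :
  cmi p a b c = \sum_t p t * lr p a b c t.
Proof. by []. Qed.

Lemma Pr_ext (T : finType) (p : T -> R) (E E' : pred T) :
  (forall s, p s != 0 -> E s = E' s) -> Pr p E = Pr p E'.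
Proof.
move=> H; rewrite /Pr [LHS]big_mkcond [RHS]big_mkcond; apply: eq_bigr => s _.
have [->|/H -> //] := eqVneq (p s) 0.
by case: (E s); case: (E' s).
Qed.

Lemma cmi_ext (T : finType) (p p' : T -> R) (A B C A' B' C' : eqType)
  (a : T -> A) (b : T -> B) (c : T -> C)
  (a' : T -> A') (b' : T -> B') (c' : T -> C') :
  p =1 p' ->
  (forall t s, p t != 0 -> p s != 0 -> (a s == a t) = (a' s == a' t)) ->
  (forall t s, p t != 0 -> p s != 0 -> (b s == b t) = (b' s == b' t)) ->
  (forall t s, p t != 0 -> p s != 0 -> (c s == c t) = (c' s == c' t)) ->
  cmi p a b c = cmi p' a' b' c'.
Proof.
move=> pp ha hb hc; rewrite !cmiE; apply: eq_bigr => t _.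
rewrite -pp; have [->|pt] := eqVneq (p t) 0; first by rewrite !mul0r.
congr (_ * _); rewrite /lr.
have E : forall (X : pred T) (Y : pred T), (forall s, p s != 0 -> X s = Y s) ->
  Pr p X = Pr p' Y.
  by move=> X Y H; rewrite (Pr_ext H) /Pr; apply: eq_bigr => s _.
congr (log2 (_ * _ / (_ * _))); apply: E => s ps /=;
  by rewrite ?ha ?hb ?hc.
Qed.

Definition pushes (T1 T2 : finType) (phi : T1 -> T2) (p1 : T1 -> R) (p2 : T2 -> R)
  := forall s, p2 s = \sum_(t | phi t == s) p1 t.

Lemma expect_push (T1 T2 : finType) (phi : T1 -> T2) p1 p2 (G : T2 -> R) :
  pushes phi p1 p2 -> \sum_t p1 t * G (phi t) = \sum_s p2 s * G s.
Proof.
move=> H; rewrite (partition_big phi predT) //=; apply: eq_bigr => s _.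
by rewrite H big_distrl /=; apply: eq_bigr => t /eqP ->.
Qed.

Lemma Pr_push (T1 T2 : finType) (phi : T1 -> T2) p1 p2 (E : pred T2) :
  pushes phi p1 p2 -> Pr p1 [pred t | E (phi t)] = Pr p2 E.
Proof.
move=> H; rewrite /Pr big_mkcond [RHS]big_mkcond /=.
transitivity (\sum_t p1 t * (fun s => if E s then 1 else 0) (phi t)).
  by apply: eq_bigr => t _ /=; case: (E _); rewrite ?mulr1 ?mulr0.
have HH := expect_push (fun s => if E s then (1:R) else 0) H.
rewrite HH. apply: eq_bigr => s _ /=.
by case: (E s); rewrite ?mulr1 ?mulr0.
Qed.

Lemma cmi_push (T1 T2 : finType) (phi : T1 -> T2) p1 p2 (A B C : eqType)
  (a : T2 -> A) (b : T2 -> B) (c : T2 -> C) :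
  pushes phi p1 p2 ->
  cmi p1 (fun t => a (phi t)) (fun t => b (phi t)) (fun t => c (phi t)) = cmi p2 a b c.
Proof.
move=> H; rewrite !cmiE -(expect_push (lr p2 a b c) H); apply: eq_bigr => t _.
congr (_ * _); rewrite /lr.
by rewrite -!(Pr_push _ H).
Qed.


Lemma ratio_scale (l x y z u : R) : l != 0 ->
  (l * x) * (l * y) / ((l * z) * (l * u)) = x * y / (z * u).
Proof.
move=> l0; have [zu0|zu0] := eqVneq (z * u) 0.
  have -> : (l * z) * (l * u) = 0 by rewrite mulrACA zu0 mulr0.
  by rewrite zu0 !invr0 !mulr0.
have [zz uu] : z != 0 /\ u != 0.
  by split; apply/eqP => e; move: zu0; rewrite e ?mul0r ?mulr0 eqxx.
by field; rewrite l0 zz uu.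
Qed.

Lemma Pr_weight (T : finType) (p : T -> R) (C : eqType) (c : T -> C) (l : C -> R)
  (E : pred T) (g : C) :
  (forall s, E s -> c s = g) -> Pr (fun t => l (c t) * p t) E = l g * Pr p E.
Proof.
move=> H; rewrite /Pr big_distrr; apply: eq_bigr => s Es /=.
by rewrite H.
Qed.

Lemma cmi_weight (T : finType) (p : T -> R) (A B C : eqType)
  (a : T -> A) (b : T -> B) (c : T -> C) (l : C -> R) :
  cmi (fun t => l (c t) * p t) a b c = \sum_t l (c t) * p t * lr p a b c t.
Proof.
rewrite cmiE; apply: eq_bigr => t _.
have [->|lt] := eqVneq (l (c t)) 0; first by rewrite !mul0r.
congr (_ * _); rewrite /lr.
rewrite !(@Pr_weight _ _ _ c l _ (c t)) ?ratio_scale //= => s.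
- by case/andP => _ /eqP.
- by case/andP => _ /eqP.
- by move=> /eqP.
- by case/and3P => _ _ /eqP.
Qed.

Lemma log2_0 : log2 (0 : R) = 0.
Proof. by rewrite /log2 ln0 ?mul0r. Qed.
Lemma log2_1 : log2 (1 : R) = 0.
Proof. by rewrite /log2 ln1 mul0r. Qed.

Lemma lr_const (T : finType) (p : T -> R) (A B C : eqType)
  (a : T -> A) (b : T -> B) (c : T -> C) t :
  (forall s, c s == c t -> a s = a t) -> lr p a b c t = 0.
Proof.
move=> H; rewrite /lr.
have -> : Pr p [pred s | [&& a s == a t, b s == b t & c s == c t]] =
          Pr p [pred s | (b s == b t) && (c s == c t)].
  apply: Pr_ext => s _ /=; case: (c s =P c t) => [/eqP e|]; last by rewrite !andbF.
  by rewrite (H _ e) eqxx.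
have -> : Pr p [pred s | (a s == a t) && (c s == c t)] = Pr p [pred s | c s == c t].
  apply: Pr_ext => s _ /=; case: (c s =P c t) => [/eqP e|]; last by rewrite !andbF.
  by rewrite (H _ e) eqxx.
set x := Pr p _; set y := Pr p _.
rewrite [y * x]mulrC; have [xy0|xy0] := eqVneq (x * y) 0.
  by rewrite xy0 mul0r log2_0.
by rewrite divff // log2_1.
Qed.

Lemma sum_pair (I S : finType) (F : I * S -> R) :
  \sum_t F t = \sum_j \sum_s F (j, s).
Proof. by rewrite pair_bigA; apply: eq_bigr => -[]. Qed.

Lemma Pr_pair (I S : finType) (al : R) (q : I -> S -> R) (E : pred (I * S)) (j : I) :
  (forall j' s', E (j', s') -> j' = j) ->
  Pr (fun t : I * S => al * q t.1 t.2) E = al * Pr (q j) [pred s | E (j, s)].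
Proof.
move=> H; rewrite /Pr big_mkcond.
rewrite sum_pair.
rewrite (bigD1 j) //= [X in _ + X]big1 ?addr0.
  by rewrite big_distrr [RHS]big_mkcond; apply: eq_bigr => s _ /=; case: (E _); rewrite ?mulr0.
move=> j' jj; apply: big1 => s _; case: ifP => // /H e.
by move: jj; rewrite e eqxx.
Qed.

Lemma cmi_prod (I S : finType) (al : R) (q : I -> S -> R) (A B C : eqType)
  (a : I -> S -> A) (b : I -> S -> B) (c : I -> S -> C) : al != 0 ->
  cmi (fun t : I * S => al * q t.1 t.2) (fun t => a t.1 t.2) (fun t => b t.1 t.2)
      (fun t => (t.1, c t.1 t.2)) =
  \sum_j al * cmi (q j) (a j) (b j) (c j).
Proof.
move=> al0; rewrite cmiE.
rewrite sum_pair; apply: eq_bigr => j _.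
rewrite cmiE big_distrr; apply: eq_bigr => s _ /=; rewrite mulrA; congr (_ * _).
rewrite /lr /= !(@Pr_pair _ _ _ _ _ j) ?ratio_scale //=.
- congr (log2 (_ * _ / (_ * _))); apply: Pr_ext => s' _ /=; by rewrite xpair_eqE eqxx.
all: move=> j' s' /=; rewrite xpair_eqE => HH; apply/eqP; move: HH.
all: first [by case/and4P => *|by case/and3P => *|by case/andP => *].
Qed.


Lemma cmi_restrict (T : finType) (p : T -> R) (A B C : eqType)
  (a a' : T -> A) (b : T -> B) (c : T -> C) (P : pred C) (ka : R) :
  (forall s, P (c s) -> a s = a' s) ->
  (forall t s, ~~ P (c t) -> c s == c t -> a' s = a' t) ->
  cmi (fun t => (if P (c t) then ka else 0) * p t) a b c = ka * cmi p a' b c.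
Proof.
move=> H1 H2; rewrite (cmi_weight p a b c (fun g => if P g then ka else 0)).
rewrite cmiE big_distrr; apply: eq_bigr => t _ /=.
case: ifP => Pt; last by rewrite [lr p a' _ _ _]lr_const ?mul0r ?mulr0 // => s; exact: H2 (negbT Pt).
rewrite -mulrA; congr (_ * (_ * _)); rewrite /lr.
have ht := H1 _ Pt.
congr (log2 (_ * _ / (_ * _))); apply: Pr_ext => s _ /=;
  (case: (c s =P c t) => [e|]; last by rewrite !andbF);
  by rewrite H1 ?ht ?e.
Qed.

End Gen.

Fixpoint lift_prot (k : nat) (A B : Type) (g : 'I_k -> B -> A) (p : protocol k A)
  : protocol k B :=
  match p with
  | Leaf o => Leaf o
  | Node i f p0 p1 => Node i (fun z => f (g i z)) (lift_prot g p0) (lift_prot g p1)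
  end.

Lemma run_lift (k : nat) (A B : Type) (g : 'I_k -> B -> A) (p : protocol k A) x :
  run (lift_prot g p) x = run p (fun i => g i (x i)).
Proof. by elim: p => //= i f p0 IH0 p1 IH1; case: (f _) => /=; rewrite ?IH0 ?IH1. Qed.

Lemma run_ext (k : nat) (A : Type) (p : protocol k A) x x' :
  (forall i, x i = x' i) -> run p x = run p x'.
Proof. by move=> H; elim: p => //= i f p0 IH0 p1 IH1; rewrite H; case: (f _); rewrite ?IH0 ?IH1. Qed.

Section Spec.
Variables (R : realType) (n k : nat) (nu : 'I_k -> R) (i0 : 'I_k).

Definition Wt := {ffun 'I_n -> 'I_k}.
Definition Yt := {ffun 'I_n -> bool}.
Definition PSt := {ffun 'I_k -> Yt}.

Definition xw (w : Wt) (y : Yt) : inputs k n :=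
  [ffun i' => [ffun j' => (w j' == i') && y j']].
Definition sw (w : Wt) (y : Yt) : R := (\prod_j' nu (w j')) * (2^-1)^+n.
Definition upd (T : Type) (w : {ffun 'I_n -> T}) j (v : T) : {ffun 'I_n -> T} :=
  [ffun j' => if j' == j then v else w j'].
Definition yof j (w : Wt) (b : bool) (ps : PSt) : Yt :=
  [ffun j' => if j' == j then b else ps (w j') j'].
Definition yfull (w : Wt) (ps : PSt) : Yt := [ffun j' => ps (w j') j'].
Definition pRd (rt : 'I_n * Wt) : R := n%:R^-1 *
  \prod_j' (if j' == rt.1 then (if rt.2 j' == i0 then 1 else 0) else nu (rt.2 j')).
Definition muu (i : 'I_k) (y : Yt) : R := (2^-1)^+n.

Lemma prod_sel (f : 'I_k -> R) (i1 : 'I_k) (b : bool) :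
  \prod_i' (if b && (i1 == i') then f i' else 1) = if b then f i1 else 1.
Proof.
case: b => /=; last by rewrite big1.
rewrite (bigD1 i1) //= eqxx big1 ?mulr1 // => i' ne.
by rewrite eq_sym (negbTE ne).
Qed.

Lemma count_ps (w : Wt) (Q : pred 'I_n) (y : Yt) :
  \sum_(ps : PSt) (\prod_i' muu i' (ps i')) *
     \prod_j' (if Q j' then (if ps (w j') j' == y j' then 1 else 0) else 1)
  = \prod_j' (if Q j' then 2^-1 else 1).
Proof.
pose F (i' : 'I_k) (j' : 'I_n) (be : bool) : R :=
  2^-1 * (if Q j' && (w j' == i') then (if be == y j' then 1 else 0) else 1).
transitivity (\sum_(ps : PSt) \prod_i' \prod_j' F i' j' (ps i' j')).
  apply: eq_bigr => ps _; rewrite /F.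
  under [RHS]eq_bigr do rewrite big_split /=.
  rewrite big_split /=; congr (_ * _).
    by apply: eq_bigr => i' _; rewrite /muu prodr_const card_ord.
  rewrite exchange_big /=; apply: eq_bigr => j' _.
  rewrite (prod_sel (fun i' => if ps i' j' == y j' then 1 else 0)).
  by case: (Q j').
rewrite -(bigA_distr_bigA (fun i' (row : Yt) => \prod_j' F i' j' (row j'))) /=.
rewrite (eq_bigr (fun i' => \prod_j' \sum_be F i' j' be)); last first.
  by move=> i' _; rewrite -(bigA_distr_bigA (F i')).
rewrite exchange_big /=; apply: eq_bigr => j' _.
rewrite /F; under eq_bigr do rewrite big_bool /=.
rewrite (eq_bigr (fun i' => if Q j' && (w j' == i') then 2^-1 else 1)).
  by rewrite (prod_sel (fun _ => 2^-1)).
move=> i' _; case: (Q j' && _); last first.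
  by rewrite /= mulr1; field.
by case: (y j'); rewrite /= ?mulr1 ?mulr0 ?addr0 ?add0r.
Qed.


Definition colok (w : Wt) (x : inputs k n) j :=
  [forall i : 'I_k, (i != w j) ==> ~~ x i j].

Lemma xw_eq w y x : (xw w y == x) =
  [forall j, colok w x j] && (y == [ffun j => x (w j) j]).
Proof.
apply/eqP/andP => [<-|[/forallP ok /eqP ->]].
  split; last by apply/eqP/ffunP => j; rewrite !ffunE eqxx.
  apply/forallP => j; apply/forallP => i; apply/implyP => ne.
  by rewrite !ffunE eq_sym (negbTE ne).
apply/ffunP => i; apply/ffunP => j; rewrite !ffunE.
case: eqP => [<- //|ne]; have := forallP (ok j) i.
by rewrite eq_sym; move/eqP: ne => -> /= /negbTE ->.
Qed.

Lemma push_D0 : pushes (fun t : Wt * Yt => (t.1, xw t.1 t.2)) (fun t => sw t.1 t.2)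
  (fun om : Wt * inputs k n => D0 nu om.1 om.2).
Proof.
move=> [w x] /=; rewrite big_mkcond sum_pair (bigD1 w) //= [X in _ + X]big1 ?addr0;
  last first.
  by move=> w' ne; apply: big1 => y _; rewrite xpair_eqE (negbTE ne).
under eq_bigr do rewrite xpair_eqE eqxx /= xw_eq.
rewrite /D0 big_split /=.
case: (boolP [forall j, colok w x j]) => [/forallP ok|/forallP nok].
  rewrite (bigD1 [ffun j => x (w j) j]) //= eqxx [X in _ + X]big1 ?addr0; last first.
    by move=> y ne; rewrite (negbTE ne) ?andbF.
  rewrite /sw; congr (_ * _); rewrite (eq_bigr (fun _ => 2^-1)) ?prodr_const ?card_ord //.
  by move=> j _; rewrite /colok in ok; rewrite ok.
rewrite [RHS]big1; last by move=> y _.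
have [j nj] : exists j, ~~ colok w x j.
  by apply/existsP; rewrite -negb_forall; apply/negP => /forallP.
by rewrite [X in _ * X](bigD1 j) //= -/(colok w x j) (negbTE nj) mul0r mulr0.
Qed.


Definition omg (om : bool * ('I_n * Wt) * PSt) : R :=
  2^-1 * pRd om.1.2 * \prod_i' muu i' (om.2 i').

Definition psi (i : 'I_k) (om : bool * ('I_n * Wt) * PSt) : 'I_n * (Wt * Yt) :=
  (om.1.2.1, (upd om.1.2.2 om.1.2.1 i, yof om.1.2.1 om.1.2.2 om.1.1 om.2)).

Definition zinfo (i : 'I_k) (t : 'I_n * (Wt * Yt)) : R :=
  n%:R^-1 * ((if t.2.1 t.1 == i then (nu i)^-1 else 0) * sw t.2.1 t.2.2).

Lemma sum_om (F : bool * ('I_n * Wt) * PSt -> R) :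
  \sum_om F om = \sum_b \sum_j \sum_w \sum_ps F ((b, (j, w)), ps).
Proof.
rewrite sum_pair sum_pair; apply: eq_bigr => b _.
by rewrite sum_pair.
Qed.

Lemma prod_ind (Q E : pred 'I_n) :
  \prod_j' (if Q j' then (if E j' then 1 else 0) else 1) =
  (if [forall j', Q j' ==> E j'] then 1 else 0) :> R.
Proof.
case: (boolP [forall _, _]) => [/forallP H|/forallP H].
  by apply: big1 => j' _; have := H j'; case: (Q j') => //= ->.
have [j' nj] : exists j', ~~ (Q j' ==> E j').
  by apply/existsP; rewrite -negb_forall; apply/negP => /forallP.
rewrite (bigD1 j') //=; move: nj; case: (Q j'); case: (E j') => //= _.
by rewrite mul0r.
Qed.

Lemma yof_eq j w b ps y : (yof j w b ps == y) =
  (b == y j) && [forall j', (j' != j) ==> (ps (w j') j' == y j')].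
Proof.
apply/eqP/andP => [<-|[/eqP -> /forallP H]].
  split; first by rewrite ffunE eqxx.
  by apply/forallP => j'; apply/implyP => ne; rewrite ffunE (negbTE ne).
apply/ffunP => j'; rewrite ffunE; case: eqP => [-> //|/eqP ne].
by have := H j'; rewrite ne => /eqP.
Qed.

Lemma push_info i : (0 < n)%N -> nu i != 0 -> pushes (psi i) omg (zinfo i).
Proof.
move=> hn nui [j [w2 y]]; rewrite big_mkcond sum_om /=.
rewrite (eq_bigr (fun b => \sum_(w : Wt) \sum_(ps : PSt)
   (((if b == y j then 1 else 0) * 2^-1) *
    ((if upd w j i == w2 then 1 else 0) * pRd (j, w)) *
    ((\prod_i' muu i' (ps i')) *
       \prod_j' (if j' != j then (if ps (w j') j' == y j' then 1 else 0) else 1))))); last first.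
  move=> b _; rewrite (bigD1 j) //= [X in _ + X]big1 ?addr0; last first.
    by move=> j' ne; apply: big1 => w _; apply: big1 => ps _; rewrite /psi /= xpair_eqE (negbTE ne).
  apply: eq_bigr => w _; apply: eq_bigr => ps _.
  rewrite /psi /= xpair_eqE eqxx /= xpair_eqE yof_eq prod_ind /omg /=.
  case: (b == y j); case: (upd w j i == w2); case: [forall _, _];
    rewrite /= ?mulr0 ?mul0r ?mulr1 ?mul1r //.
  by rewrite mulr0 mul0r.
rewrite (eq_bigr (fun b => ((if b == y j then 1 else 0) * 2^-1) *
   \sum_(w : Wt) (((if upd w j i == w2 then 1 else 0) * pRd (j, w)) *
     \prod_j' (if j' != j then 2^-1 else 1)))); last first.
  move=> b _; rewrite big_distrr; apply: eq_bigr => w _.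
  rewrite -big_distrr /= -mulrA; congr (_ * (_ * _)); exact: (count_ps w (fun j0 => j0 != j)).
rewrite -big_distrl /= big_bool /=.
have -> : (if true == y j then 1 else 0) * 2^-1 + (if false == y j then 1 else 0) * 2^-1
  = 2^-1 :> R by case: (y j); rewrite /= ?mul1r ?mul0r ?addr0 ?add0r.
rewrite /zinfo /=.
case: (eqVneq (w2 j) i) => [w2j|w2j]; last first.
  rewrite mul0r mulr0 big1 ?mulr0 // => w _.
  have -> : (upd w j i == w2) = false.
    by apply/negbTE; apply: contra w2j => /eqP <-; rewrite ffunE eqxx.
  by rewrite mul0r mul0r.
pose w0 := upd w2 j i0.
rewrite (bigD1 w0) //= [X in _ + X]big1 ?addr0; last first.
  move=> w ne; case: (eqVneq (upd w j i) w2) => [e|]; last by rewrite !mul0r.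
  case: (eqVneq (w j) i0) => [wj|wj].
    case/negP: ne; apply/eqP/ffunP => j'; rewrite /w0 -e !ffunE.
    by case: eqP => // ->.
  by rewrite /pRd /= (bigD1 j) //= eqxx (negbTE wj) !(mul0r, mulr0).
have -> : upd w0 j i = w2.
  by apply/ffunP => j'; rewrite !ffunE; case: eqP => // ->; rewrite w2j.
rewrite eqxx mul1r /pRd /= /sw.
set A := \prod_(j' < n | j' != j) nu (w2 j').
set B := \prod_(j' < n | j' != j) (2:R)^-1.
have e1 : \prod_j' (if j' == j then (if w0 j' == i0 then 1 else 0) else nu (w0 j')) = A.
  rewrite (bigD1 j) //= eqxx /w0 ffunE eqxx eqxx mul1r; apply: eq_bigr => j' ne.
  by rewrite (negbTE ne) ffunE (negbTE ne).
have e2 : \prod_j' (if j' != j then 2^-1 else 1) = B.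
  by rewrite (bigD1 j) //= eqxx mul1r; apply: eq_bigr => j' ->.
have e3 : \prod_j' nu (w2 j') = nu i * A by rewrite (bigD1 j) //= w2j.
have e4 : ((2:R)^-1)^+n = 2^-1 * B.
  by rewrite -(card_ord n) -prodr_const (bigD1 j).
rewrite e1 e2 e3 e4; field.
by rewrite nui pnatr_eq0 -lt0n hn.
Qed.


Variable P : protocol k {ffun 'I_n -> bool}.

Definition rowf j (w : Wt) (i' : 'I_k) (z : bool * Yt) : Yt :=
  [ffun j' => if j' == j then z.1 else (w j' == i') && z.2 j'].

Definition LamD (rt : 'I_n * Wt) : protocol k (bool * Yt) := lift_prot (rowf rt.1 rt.2) P.

Lemma pRd_supp j w : pRd (j, w) != 0 -> w j = i0.
Proof.
apply: contraNeq => /negbTE ne; rewrite /pRd /= (bigD1 j) //= eqxx.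
by rewrite eq_sym ne !(mul0r, mulr0).
Qed.

Lemma cmi_eqfun (T : finType) (p p' : T -> R) (A B C : eqType)
  (a a' : T -> A) (b b' : T -> B) (c c' : T -> C) :
  p =1 p' -> a =1 a' -> b =1 b' -> c =1 c' -> cmi p a b c = cmi p' a' b' c'.
Proof.
move=> pp aa bb cc; apply: cmi_ext => // t s _ _; by rewrite ?aa ?bb ?cc.
Qed.

Lemma row_eq i j (w : Wt) b (ps : PSt) i' :
  rowf j w i' (evec i b i', ps i') = xw (upd w j i) (yof j w b ps) i'.
Proof.
apply/ffunP => j'; rewrite /rowf /xw /upd /yof /evec !ffunE /=.
case: eqP => _.
  by case: eqP => [->|/eqP ne]; rewrite ?eqxx // eq_sym (negbTE ne).
by case: eqP => [->|].
Qed.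

Lemma info_i i : (0 < n)%N -> nu i != 0 ->
  and_info pRd muu LamD i = \sum_j n%:R^-1 * ((nu i)^-1 *
    cmi (fun om : Wt * inputs k n => D0 nu om.1 om.2) (fun om => om.2 i j)
        (fun om => transcript P (fun i' => om.2 i')) (fun om => om.1)).
Proof.
move=> hn nui; rewrite /and_info.
transitivity (cmi omg (fun om => (psi i om).2.2 (psi i om).1)
   (fun om => transcript P (fun i' => xw (psi i om).2.1 (psi i om).2.2 i'))
   (fun om => ((psi i om).1, (psi i om).2.1))).
  apply: cmi_ext => //.
  - by move=> t s _ _; rewrite /psi /= !ffunE !eqxx.
  - move=> t s _ _; congr (_ == _); rewrite /transcript /LamD /=;
    (rewrite run_lift; congr (_.1); apply: run_ext => i').
    apply: (@eq_trans _ _ (xw (upd s.1.2.2 s.1.2.1 i) (yof s.1.2.1 s.1.2.2 s.1.1 s.2) i'));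
      [exact: row_eq|reflexivity].
    apply: (@eq_trans _ _ (xw (upd t.1.2.2 t.1.2.1 i) (yof t.1.2.1 t.1.2.2 t.1.1 t.2) i'));
      [exact: row_eq|reflexivity].
  - move=> [[bt [jt wt]] pst] [[bs [js ws]] pss] /= ht hs.
    have wtj : wt jt = i0.
      by apply: pRd_supp; apply: contraNneq ht => e; rewrite /omg /= e mulr0 mul0r.
    have wsj : ws js = i0.
      by apply: pRd_supp; apply: contraNneq hs => e; rewrite /omg /= e mulr0 mul0r.
    rewrite /psi /= !xpair_eqE; case: (eqVneq js jt) => [e|] //=; subst js.
    apply/eqP/eqP => [->//|e]; apply/ffunP => j'.
    have := congr1 (fun f : {ffun 'I_n -> 'I_k} => f j') e; rewrite /= !ffunE.
    by case: eqP => [->|] //; rewrite wtj wsj.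
rewrite (cmi_push (fun t : 'I_n * (Wt * Yt) => t.2.2 t.1)
  (fun t : 'I_n * (Wt * Yt) => transcript P (fun i' => xw t.2.1 t.2.2 i'))
  (fun t : 'I_n * (Wt * Yt) => (t.1, t.2.1))
  (push_info hn nui)).
rewrite /zinfo.
rewrite (cmi_prod (fun (j : 'I_n) (s : Wt * Yt) => (if s.1 j == i then (nu i)^-1 else 0) * sw s.1 s.2)
  (fun (j : 'I_n) (s : Wt * Yt) => s.2 j)
  (fun (j : 'I_n) (s : Wt * Yt) => transcript P (fun i' => xw s.1 s.2 i'))
  (fun (j : 'I_n) (s : Wt * Yt) => s.1)); last first.
  by rewrite invr_eq0 pnatr_eq0 -lt0n.
apply: eq_bigr => j _; congr (_ * _).
rewrite (@cmi_restrict _ _ (fun s : Wt * Yt => sw s.1 s.2) _ _ _ (fun s => s.2 j)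
  (fun s => (s.1 j == i) && s.2 j) (fun s => transcript P (fun i' => xw s.1 s.2 i'))
  (fun s => s.1) (fun w : Wt => w j == i)).
- congr (_ * _).
  rewrite -(cmi_push (fun t : Wt * inputs k n => t.2 i j)
     (fun t : Wt * inputs k n => transcript P (fun i' => t.2 i'))
     (fun t : Wt * inputs k n => t.1) push_D0).
  by apply: cmi_eqfun => // t; rewrite /= !ffunE.
- by move=> s /= ->.
- by move=> t s /= /negbTE ne /eqP ->; rewrite ne.
Qed.

Lemma dist_muu i : is_dist (muu i).
Proof.
split=> [y|]; first by rewrite /muu exprn_ge0 // invr_ge0.
rewrite /muu sumr_const card_ffun card_bool card_ord -[_ *+ (2 ^ n)]mulr_natr natrX -exprMn.
by rewrite mulVf ?expr1n //; apply/eqP; lra.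
Qed.

Hypothesis nu_dist : is_dist nu.

Lemma dist_pRd : (0 < n)%N -> is_dist pRd.
Proof.
move=> hn; case: nu_dist => nu0 nu1; split=> [[j w]|].
  rewrite /pRd mulr_ge0 ?invr_ge0 ?ler0n // prodr_ge0 // => j' _.
  by case: ifP => _; [case: ifP|apply: nu0].
rewrite sum_pair (eq_bigr (fun _ => n%:R^-1)).
  by rewrite sumr_const card_ord -[_ *+ n]mulr_natr mulVf // pnatr_eq0 -lt0n.
move=> j _; rewrite /pRd /= -big_distrr /=.
rewrite -(bigA_distr_bigA (fun j' v => if j' == j then (if v == i0 then 1 else 0) else nu v)).
rewrite big1 ?mulr1 // => j' _; case: (j' == j); last exact: nu1.
by rewrite (bigD1 i0) //= eqxx big1 ?addr0 // => v /negbTE ->.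
Qed.

Lemma upd_id (T : finType) (y : {ffun 'I_n -> T}) j : upd y j (y j) = y.
Proof. by apply/ffunP => j'; rewrite ffunE; case: eqP => // ->. Qed.

Lemma upd_upd (T : finType) (y : {ffun 'I_n -> T}) j a b : upd (upd y j a) j b = upd y j b.
Proof. by apply/ffunP => j'; rewrite !ffunE; case: eqP. Qed.

Lemma swap_coord (T : finType) j (a b : T) (G : {ffun 'I_n -> T} -> R) :
  (forall w v, G (upd w j v) = G w) ->
  \sum_(w : {ffun 'I_n -> T}) (if w j == a then G w else 0) =
  \sum_(w : {ffun 'I_n -> T}) (if w j == b then G w else 0).
Proof.
move=> HG; pose sg (w : {ffun 'I_n -> T}) := upd w j (tperm a b (w j)).
have sgK : involutive sg.
  by move=> w; rewrite /sg upd_upd ffunE eqxx tpermK upd_id.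
rewrite (reindex_inj (inv_inj sgK)); apply: eq_bigr => w _.
rewrite /sg HG ffunE eqxx.
have -> : (tperm a b (w j) == a) = (w j == b).
  by rewrite -[X in _ == X](tpermR a b) (inj_eq perm_inj).
by [].
Qed.

Lemma swap_dummy j (h : Wt -> R) : (forall w v, h (upd w j v) = h w) ->
  \sum_(w : Wt) (\prod_j' (if j' == j then (if w j' == i0 then 1 else 0) else nu (w j'))) * h w
  = \sum_(w : Wt) (\prod_j' nu (w j')) * h w.
Proof.
move=> Hh; case: nu_dist => _ nu1.
pose G (w : Wt) := (\prod_(j' | j' != j) nu (w j')) * h w.
have HG : forall w v, G (upd w j v) = G w.
  move=> w v; rewrite /G Hh; congr (_ * _); apply: eq_bigr => j' ne.
  by rewrite ffunE (negbTE ne).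
transitivity (\sum_(w : Wt) (if w j == i0 then G w else 0)).
  apply: eq_bigr => w _; rewrite (bigD1 j) //= eqxx /G.
  rewrite (eq_bigr (fun j' => nu (w j'))); last by move=> j' /negbTE ->.
  by case: ifP; rewrite ?mul1r ?mul0r.
symmetry; transitivity (\sum_(w : Wt) \sum_v (if w j == v then nu v * G w else 0)).
  apply: eq_bigr => w _; rewrite (bigD1 (w j)) //= eqxx [X in _ + X]big1 ?addr0.
    by rewrite (bigD1 j) //= /G mulrA.
  by move=> v ne; rewrite eq_sym (negbTE ne).
rewrite exchange_big /= -(mulr1 (\sum_(w : Wt) _)) -nu1 big_distrr /=.
apply: eq_bigr => v _; rewrite (swap_coord i0 v HG) big_distrl /=.
by apply: eq_bigr => w _; case: ifP; rewrite ?mul0r // mulrC.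
Qed.
Definition psie (om : ('I_n * Wt) * PSt) : 'I_n * (Wt * Yt) :=
  (om.1.1, (om.1.2, yfull om.1.2 om.2)).
Definition omge (om : ('I_n * Wt) * PSt) : R := pRd om.1 * \prod_i' muu i' (om.2 i').
Definition ze (t : 'I_n * (Wt * Yt)) : R := pRd (t.1, t.2.1) * (2^-1)^+n.

Lemma push_err : pushes psie omge ze.
Proof.
move=> [j [w y]]; rewrite big_mkcond sum_pair sum_pair /=.
rewrite (bigD1 j) //= [X in _ + X]big1 ?addr0; last first.
  by move=> j' ne; apply: big1 => w' _; apply: big1 => ps _; rewrite /psie xpair_eqE (negbTE ne).
rewrite (bigD1 w) //= [X in _ + X]big1 ?addr0; last first.
  by move=> w' ne; apply: big1 => ps _; rewrite /psie !xpair_eqE (negbTE ne) andbF.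
rewrite /ze /= (_ : ((2:R)^-1)^+n = \prod_(j' < n) (if predT j' then 2^-1 else 1)); last first.
  by rewrite (eq_bigr (fun _ => 2^-1)) // prodr_const card_ord.
rewrite -(count_ps w predT y) /= big_distrr /=; apply: eq_bigr => ps _.
rewrite /psie /omge /= !xpair_eqE !eqxx /=.
have -> : \prod_j' (if ps (w j') j' == y j' then 1 else 0) =
   (if yfull w ps == y then 1 else 0) :> R.
  have := prod_ind predT (fun j' => ps (w j') j' == y j'); rewrite /= => ->.
  congr (if _ then _ else _); apply/forallP/eqP => [H|<- j'].
    by apply/ffunP => j'; rewrite ffunE; apply/eqP.
  by rewrite ffunE.
by case: (_ == y); rewrite ?mulr1 ?mulr0.
Qed.

Definition gF (t : 'I_n * (Wt * Yt)) : R :=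
  if output P (fun i' => xw t.2.1 (upd t.2.2 t.1 false) i') then 1 else 0.
Definition gT (t : 'I_n * (Wt * Yt)) : R :=
  if output P (fun i' => setcol (xw t.2.1 t.2.2) t.1 i') then 0 else 1.

Lemma rowf_false j (w : Wt) (ps : PSt) i' :
  rowf j w i' (false, ps i') = xw w (upd (yfull w ps) j false) i'.
Proof.
apply/ffunP => j'; rewrite /rowf /xw /upd /yfull !ffunE /=.
by case: eqP => _; [rewrite andbF|case: eqP => [->|]].
Qed.

Lemma rowf_true j (w : Wt) (ps : PSt) i' :
  rowf j w i' (true, ps i') = setcol (xw w (yfull w ps)) j i'.
Proof.
apply/ffunP => j'; rewrite /rowf /xw /setcol /yfull !ffunE /=.
by case: eqP => _ //; case: eqP => [->|].
Qed.

Lemma and_error_false : and_error pRd muu LamD false = \sum_t ze t * gF t.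
Proof.
rewrite -(expect_push gF push_err) /and_error [RHS]sum_pair; apply: eq_bigr => r _.
apply: eq_bigr => ps _; rewrite /omge /gF /psie /=; congr (_ * _).
rewrite /output /LamD run_lift.
have -> : run P (fun i => rowf r.1 r.2 i (false, ps i)) =
          run P (fun i' => xw r.2 (upd (yfull r.2 ps) r.1 false) i').
  by apply: run_ext => i'; apply: rowf_false.
by case: (run _ _).2.
Qed.

Lemma and_error_true : and_error pRd muu LamD true = \sum_t ze t * gT t.
Proof.
rewrite -(expect_push gT push_err) /and_error [RHS]sum_pair; apply: eq_bigr => r _.
apply: eq_bigr => ps _; rewrite /omge /gT /psie /=; congr (_ * _).
rewrite /output /LamD run_lift.
have -> : run P (fun i => rowf r.1 r.2 i (true, ps i)) =
          run P (fun i' => setcol (xw r.2 (yfull r.2 ps)) r.1 i').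
  by apply: run_ext => i'; apply: rowf_true.
by case: (run _ _).2.
Qed.

Lemma D0_expect (H : Wt -> inputs k n -> R) :
  \sum_(w : Wt) \sum_(x : inputs k n) D0 nu w x * H w x =
  \sum_(w : Wt) \sum_(y : Yt) sw w y * H w (xw w y).
Proof.
transitivity (\sum_(om : Wt * inputs k n) D0 nu om.1 om.2 * H om.1 om.2).
  by rewrite sum_pair.
transitivity (\sum_(t : Wt * Yt) sw t.1 t.2 * H t.1 (xw t.1 t.2)); last by rewrite sum_pair.
symmetry; exact: (expect_push (fun om : Wt * inputs k n => H om.1 om.2) push_D0).
Qed.

Lemma prodnu_ge0 (w : Wt) : 0 <= \prod_j' nu (w j').
Proof. by case: nu_dist => nu0 _; apply: prodr_ge0 => j' _; apply: nu0. Qed.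

Lemma sw_ge0 w y : 0 <= sw w y.
Proof. by rewrite /sw mulr_ge0 ?prodnu_ge0 // exprn_ge0 // invr_ge0. Qed.

Lemma ysum j (f : Yt -> R) : (forall y, 0 <= f y) ->
  \sum_(y : Yt) f (upd y j false) <= 2 * \sum_(y : Yt) f y.
Proof.
move=> f0.
have -> : \sum_(y : Yt) f (upd y j false) =
  \sum_(y : Yt) (if y j == false then f (upd y j false) else 0) +
  \sum_(y : Yt) (if y j == true then f (upd y j false) else 0).
  by rewrite -big_split; apply: eq_bigr => y _ /=; case: (y j) => /=; rewrite ?addr0 ?add0r.
rewrite -(swap_coord false true (G := fun y : Yt => f (upd y j false))); last first.
  by move=> y v; rewrite upd_upd.
have : \sum_(y : Yt) (if y j == false then f (upd y j false) else 0) <= \sum_(y : Yt) f y.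
  apply: ler_sum => y _; case: eqP => [e|_] //.
  by rewrite -e upd_id.
move: (\sum_(y : Yt) (if _ then _ else _)) => a; move: (\sum_(y : Yt) f y) => b'.
move=> h; lra.
Qed.

Lemma xw_upd_false (w : Wt) y j v :
  xw (upd w j v) (upd y j false) = xw w (upd y j false).
Proof.
apply/ffunP => i'; apply/ffunP => j'; rewrite !ffunE.
by case: (j' == j); rewrite ?andbF.
Qed.

Lemma setcol_upd (w : Wt) y j v : setcol (xw (upd w j v) y) j = setcol (xw w y) j.
Proof.
apply/ffunP => i'; apply/ffunP => j'; rewrite !ffunE.
by case: eqP => //; rewrite !ffunE => /eqP /negbTE ->.
Qed.

Definition E0 : R := \sum_(w : Wt) \sum_(y : Yt) sw w y *
  (if output P (fun i' => xw w y i') then 1 else 0).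
Definition E1 : R := \sum_(w : Wt) \sum_(y : Yt) sw w y *
  (n%:R^-1 * \sum_(j < n) (if output P (fun i' => setcol (xw w y) j i') then 0 else 1)).

Lemma ze_split (F : 'I_n * (Wt * Yt) -> R) :
  \sum_t ze t * F t = \sum_j n%:R^-1 * \sum_(w : Wt)
    (\prod_j' (if j' == j then (if w j' == i0 then 1 else 0) else nu (w j'))) *
    \sum_(y : Yt) (2^-1)^+n * F (j, (w, y)).
Proof.
rewrite sum_pair; apply: eq_bigr => j _; rewrite sum_pair big_distrr /=.
apply: eq_bigr => w _; rewrite big_distrr big_distrr /=; apply: eq_bigr => y _.
by rewrite /ze /pRd /= !mulrA.
Qed.

Lemma and_false_bound : (0 < n)%N -> and_error pRd muu LamD false <= 2 * E0.
Proof.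
move=> hn; rewrite and_error_false ze_split.
have -> : 2 * E0 = \sum_(j < n) n%:R^-1 * (2 * E0).
  by rewrite -big_distrl /= sumr_const card_ord -[_ *+ n]mulr_natr mulVf ?mul1r // pnatr_eq0 -lt0n.
apply: ler_sum => j _; apply: ler_wpM2l; first by rewrite invr_ge0 ler0n.
rewrite swap_dummy; last first.
  by move=> w v; apply: eq_bigr => y _; rewrite /gF /= xw_upd_false.
rewrite /E0 big_distrr /=; apply: ler_sum => w _.
rewrite (_ : \sum_(y : Yt) sw w y * _ = \prod_j' nu (w j') * \sum_(y : Yt) (2^-1)^+n *
   (if output P (fun i' => xw w y i') then 1 else 0)); last first.
  by rewrite big_distrr; apply: eq_bigr => y _; rewrite /sw -mulrA.
rewrite mulrCA; apply: ler_wpM2l; first exact: prodnu_ge0.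
apply: (ysum j (f := fun y : Yt => (2^-1)^+n * (if output P (fun i' => xw w y i') then 1 else 0))).
by move=> y; rewrite mulr_ge0 ?exprn_ge0 ?invr_ge0 //; case: ifP.
Qed.

Lemma and_true_eq : and_error pRd muu LamD true = E1.
Proof.
rewrite and_error_true ze_split.
transitivity (\sum_j n%:R^-1 * \sum_(w : Wt) (\prod_j' nu (w j')) *
    \sum_(y : Yt) (2^-1)^+n * gT (j, (w, y))).
  apply: eq_bigr => j _; congr (_ * _); apply: swap_dummy => w v.
  by apply: eq_bigr => y _; rewrite /gT /= setcol_upd.
rewrite /E1.
under eq_bigr => j _ do rewrite big_distrr /=.
under eq_bigr => j _ do under eq_bigr => w _ do rewrite big_distrr /= big_distrr /=.
rewrite exchange_big /=; apply: eq_bigr => w _.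
rewrite exchange_big /=; apply: eq_bigr => y _.
rewrite big_distrr big_distrr /=; apply: eq_bigr => j _.
rewrite /sw /gT /=. move: (\prod_(j' < n) _) (2^-1 ^+ n) (n%:R^-1) (if _ then _ else _) => a b c d. ring.
Qed.



End Spec.

Unset Implicit Arguments.

Theorem mainTheorem5 (R : realType) (n k : nat) (nu : 'I_k -> R)
  (P : protocol k {ffun 'I_n -> bool}) :
  (1 <= n)%N -> (2 <= k)%N ->
  is_dist nu -> (forall i, 0 < nu i) ->
  disj_error nu P <= 2%:R / 100%:R ->
  exists (RT PT : finType) (pR : RT -> R) (mu : 'I_k -> PT -> R)
         (Lam : RT -> protocol k (bool * PT)),
    [/\ is_dist pR, (forall i, is_dist (mu i)),
        and_error pR mu Lam false <= 8%:R / 100%:R,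
        and_error pR mu Lam true <= 8%:R / 100%:R &
        infoL nu P = \sum_(i < k) and_info pR mu Lam i].
Proof.
move=> hn hk hnu nupos herr.
have k0 : (0 < k)%N by apply: leq_trans hk.
pose i0 : 'I_k := Ordinal k0.
exists ('I_n * {ffun 'I_n -> 'I_k})%type, {ffun 'I_n -> bool}, (pRd nu i0 (n:=n)),
  (@muu R n k), (LamD P).
have E0e : \sum_(w : Wt n k) \sum_(x : inputs k n) D0 nu w x *
   (if output P (fun i => x i) then 1 else 0) = E0 nu P.
  by rewrite D0_expect.
have E1e : \sum_(w : Wt n k) \sum_(x : inputs k n) D0 nu w x *
   (n%:R^-1 * \sum_(j < n) (if output P (fun i => setcol x j i) then 0 else 1)) = E1 nu P.
  by rewrite D0_expect.
have E0p : 0 <= E0 nu P.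
  apply: sumr_ge0 => w _; apply: sumr_ge0 => y _; rewrite mulr_ge0 ?sw_ge0 //.
  by case: ifP.
have E1p : 0 <= E1 nu P.
  apply: sumr_ge0 => w _; apply: sumr_ge0 => y _; rewrite mulr_ge0 ?sw_ge0 //.
  rewrite mulr_ge0 ?invr_ge0 ?ler0n // sumr_ge0 // => j _; by case: ifP.
have hd : 2^-1 * E0 nu P + 2^-1 * E1 nu P <= 2%:R / 100%:R.
  by rewrite -E0e -E1e.
split.
- exact: dist_pRd.
- exact: dist_muu.
- apply: le_trans (and_false_bound _ _ _ hn) _ => //; lra.
- by rewrite and_true_eq //; lra.
rewrite /infoL big_distrr /=; apply: eq_bigr => i _.
rewrite info_i //; last by rewrite gt_eqF.
by rewrite -big_distrr /= -big_distrr /= big_distrr.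
Qed.
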